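(* Let $A$ be a two-dimensional evolution algebra over a field $\mathbb{K}$. (i) If $A^2=A$ and for every natural basis $\{e_1,e_2\}$ of $A$, writing $e_1^2=\omega_{11}e_1+\omega_{21}e_2$ and $e_2^2=\omega_{12}e_1+\omega_{22}e_2$, one has $\omega_{12}\neq0$ and $\omega_{21}\neq0$, then $A$ is simple. (ii) If $A$ is simple, then for every natural basis $\{e_1,e_2\}$ of $A$ (with the same notation) one has $\omega_{12}\neq0$ and $\omega_{21}\neq0$.
   Context: An evolution algebra over $\mathbb{K}$ is a $\mathbb{K}$-algebra $A$ with a basis $\{e_i\}$ (a natural basis) such that $e_ie_j=0$ for $i\neq j$. In the paper's language, $\omega_{12}\neq0$ and $\omega_{21}\neq0$ means that the top and bottom edges appear in the pseudo-square relative to that basis. $A$ is simple if $A^2\neq0$ and its only ideals are $0$ and $A$. *)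

(* Defs.v *)
From HB Require Import structures.
From mathcomp Require Import all_boot all_order all_algebra.
Set Implicit Arguments. Unset Strict Implicit. Unset Printing Implicit Defensive.
Import GRing.Theory.
Local Open Scope ring_scope.

Definition bilinear_mul (K : fieldType) (V : vectType K) (mul : V -> V -> V) :=
  (forall (a : K) (x y z : V), mul (a *: x + y) z = a *: mul x z + mul y z) /\
  (forall (a : K) (x y z : V), mul z (a *: x + y) = a *: mul z x + mul z y).

Definition natural_basis2 (K : fieldType) (V : vectType K) (mul : V -> V -> V)
    (e1 e2 : V) :=
  basis_of fullv [:: e1; e2] /\ mul e1 e2 = 0 /\ mul e2 e1 = 0.

Definition evolution_algebra2 (K : fieldType) (V : vectType K) (mul : V -> V -> V) :=
  bilinear_mul mul /\ exists e1 e2 : V, natural_basis2 mul e1 e2.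

Definition square_is_full (K : fieldType) (V : vectType K) (mul : V -> V -> V) :=
  forall z : V, exists s : seq (V * V), z = \sum_(p <- s) mul p.1 p.2.

Definition square_nonzero (K : fieldType) (V : vectType K) (mul : V -> V -> V) :=
  exists x y : V, mul x y != 0.

Definition is_ideal (K : fieldType) (V : vectType K) (mul : V -> V -> V)
    (I : {vspace V}) :=
  forall x y : V, x \in I -> mul x y \in I /\ mul y x \in I.

Definition simple_algebra (K : fieldType) (V : vectType K) (mul : V -> V -> V) :=
  square_nonzero mul /\
  forall I : {vspace V}, is_ideal mul I -> I = 0%VS \/ I = fullv.

(* Main.v *)
Require Import Defs.
From HB Require Import structures.
From mathcomp Require Import all_boot all_order all_algebra.
Import GRing.Theory.
Local Open Scope ring_scope.
Set Implicit Arguments.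

Section Aux.
Variables (K : fieldType) (V : vectType K) (mul : V -> V -> V).
Hypothesis Hb : bilinear_mul mul.

Lemma mul0l z : mul 0 z = 0.
Proof.
have := (proj1 Hb) 1 0 0 z; rewrite !scale1r !addr0 => H.
have H2 : mul 0 z + 0 = mul 0 z + mul 0 z by rewrite addr0.
exact: (esym (addrI _ H2)).
Qed.
Lemma mul0r z : mul z 0 = 0.
Proof.
have := (proj2 Hb) 1 0 0 z; rewrite !scale1r !addr0 => H.
have H2 : mul z 0 + 0 = mul z 0 + mul z 0 by rewrite addr0.
exact: (esym (addrI _ H2)).
Qed.
Lemma mulZl a x z : mul (a *: x) z = a *: mul x z.
Proof. by have := (proj1 Hb) a x 0 z; rewrite addr0 mul0l addr0. Qed.
Lemma mulZr a x z : mul z (a *: x) = a *: mul z x.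
Proof. by have := (proj2 Hb) a x 0 z; rewrite addr0 mul0r addr0. Qed.
Lemma mulDl x y z : mul (x + y) z = mul x z + mul y z.
Proof. by have := (proj1 Hb) 1 x y z; rewrite !scale1r. Qed.
Lemma mulDr x y z : mul z (x + y) = mul z x + mul z y.
Proof. by have := (proj2 Hb) 1 x y z; rewrite !scale1r. Qed.

Lemma decomp {K' : fieldType} {V' : vectType K'} {e1 e2 : V'} : basis_of fullv [:: e1; e2] ->
  forall v, exists a b : K', v = a *: e1 + b *: e2.
Proof.
move=> /andP[/eqP Hs _] v; have := memvf v.
rewrite -Hs span_cons span_seq1 => /memv_addP [v1 /vlineP[a ->] [v2 /vlineP [b ->] ->]].
by exists a, b.
Qed.

End Aux.

Theorem proposition2p3 (K : fieldType) (V : vectType K) (mul : V -> V -> V) :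
  evolution_algebra2 mul -> \dim (fullv : {vspace V}) = 2%N ->
  ((square_is_full mul /\
    (forall (e1 e2 : V) (w11 w21 w12 w22 : K),
       natural_basis2 mul e1 e2 ->
       mul e1 e1 = w11 *: e1 + w21 *: e2 ->
       mul e2 e2 = w12 *: e1 + w22 *: e2 ->
       w12 != 0 /\ w21 != 0)) ->
   simple_algebra mul)
  /\
  (simple_algebra mul ->
   forall (e1 e2 : V) (w11 w21 w12 w22 : K),
     natural_basis2 mul e1 e2 ->
     mul e1 e1 = w11 *: e1 + w21 *: e2 ->
     mul e2 e2 = w12 *: e1 + w22 *: e2 ->
     w12 != 0 /\ w21 != 0).
Proof.
move=> [Hb [e1 [e2 Hnb]]] Hdim; split.
- move=> [Hfull Hw]; split.
  + have [z /eqP Hz] : exists z : V, z != 0.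
      exists (vpick (fullv : {vspace V})); rewrite vpick0.
      by apply/eqP => H; move: Hdim; rewrite H dimv0.
    have [s Hs] := Hfull z.
    case: (boolP [exists i : 'I_(size s), mul (nth (0,0) s i).1 (nth (0,0) s i).2 != 0]).
      by move=> /existsP [i Hi]; exists (nth (0,0) s i).1, (nth (0,0) s i).2.
    move=> /existsPn Hn; exfalso; apply: Hz; rewrite Hs.
    rewrite (big_nth (0,0)) big_mkord big1 // => i _.
    by have := Hn i; rewrite negbK => /eqP.
  + move=> I HI.
    case: (eqVneq I 0%VS) => [->|HI0]; first by left.
    right.
    have [Hbas [H12 H21]] := Hnb.
    have [w11 [w21 E1]] := decomp Hbas (mul e1 e1).
    have [w12 [w22 E2]] := decomp Hbas (mul e2 e2).
    have [nz12 nz21] := Hw _ _ _ _ _ _ Hnb E1 E2.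
    have step1 : mul e1 e1 \in I -> mul e2 e2 \in I.
      move=> H; have := (HI _ e2 H).1.
      rewrite E1 (mulDl Hb) !(mulZl Hb) H12 scaler0 add0r => /(memvZ w21^-1).
      by rewrite scalerA mulVf // scale1r.
    have step2 : mul e2 e2 \in I -> mul e1 e1 \in I.
      move=> H; have := (HI _ e1 H).1.
      rewrite E2 (mulDl Hb) !(mulZl Hb) H21 scaler0 addr0 => /(memvZ w12^-1).
      by rewrite scalerA mulVf // scale1r.
    set u := vpick I.
    have uI : u \in I by apply: memv_pick.
    have unz : u != 0 by rewrite vpick0.
    have [a [b Eu]] := decomp Hbas u.
    have both : mul e1 e1 \in I /\ mul e2 e2 \in I.
      case: (eqVneq a 0) => [a0|anz].
        have bnz : b != 0 by apply: contraNneq unz; rewrite Eu a0 => ->; rewrite !scale0r addr0.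
        have := (HI _ e2 uI).1; rewrite Eu (mulDl Hb) !(mulZl Hb) H12 scaler0 add0r.
        move=> /(memvZ b^-1); rewrite scalerA mulVf // scale1r => H.
        by split => //; apply: step2.
      have := (HI _ e1 uI).1; rewrite Eu (mulDl Hb) !(mulZl Hb) H21 scaler0 addr0.
      move=> /(memvZ a^-1); rewrite scalerA mulVf // scale1r => H.
      by split => //; apply: step1.
    have prodI : forall x y, mul x y \in I.
      move=> x y; have [x1 [x2 ->]] := decomp Hbas x; have [y1 [y2 ->]] := decomp Hbas y.
      rewrite !(mulDl Hb, mulDr Hb, mulZl Hb, mulZr Hb) H12 H21 !scaler0 addr0 add0r.
      by apply: memvD; apply: memvZ; apply: memvZ; case: both.
    apply/eqP; rewrite eqEsubv subvf /=; apply/subvP => z _.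
    have [s ->] := Hfull z.
    by apply: memv_suml => i _; apply: prodI.
- move=> [_ Hs] f1 f2 w11 w21 w12 w22 [Hbas [H12 H21]] E1 E2.
  have f1nz : f1 != 0 by apply: (basis_not0 Hbas); rewrite inE eqxx.
  have f2nz : f2 != 0 by apply: (basis_not0 Hbas); rewrite !inE eqxx orbT.
  have notfull : forall f : V, <[f]>%VS <> fullv.
    by move=> f Hf; move: Hdim; rewrite -Hf dim_vline; case: (f != 0).
  split.
  + apply/eqP => w0.
    have HI : is_ideal mul <[f2]>%VS.
      move=> x y /vlineP [c ->]; have [a [b ->]] := decomp Hbas y.
      rewrite !(mulDl Hb, mulDr Hb, mulZl Hb, mulZr Hb) H12 H21 E2 w0 !scale0r !scaler0 !add0r.
      by split; rewrite !memvZ // memv_line.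
    case: (Hs _ HI) => [/eqP|/notfull //].
    by rewrite -dimv_eq0 dim_vline f2nz.
  + apply/eqP => w0.
    have HI : is_ideal mul <[f1]>%VS.
      move=> x y /vlineP [c ->]; have [a [b ->]] := decomp Hbas y.
      rewrite !(mulDl Hb, mulDr Hb, mulZl Hb, mulZr Hb) H12 H21 E1 w0 !scale0r !scaler0 !addr0.
      by split; rewrite !memvZ // memv_line.
    case: (Hs _ HI) => [/eqP|/notfull //].
    by rewrite -dimv_eq0 dim_vline f1nz.
Qed.
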